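(* Let $k=\mathbb Q$, let $L$ be a totally real number field with $r=[L:\mathbb Q]$, let $V$ be an $L$-vector space of dimension $m\ge5$ with nondegenerate symmetric $L$-bilinear form $\Phi=d_1X_1^2+\dots+d_mX_m^2$ ($d_i\in L$), and let $\phi=\mathrm{tr}_{L/\mathbb Q}\circ\Phi$ on $V$ viewed as a $\mathbb Q$-vector space. Let $F/k$ be a finite Galois extension containing $L$, $\sqrt{-1}$ and $\sqrt{\sigma(d_i)}$ for all $i$ and all embeddings $\sigma\colon L\hookrightarrow F$, and let $\sigma_1,\dots,\sigma_r$ be these embeddings. Then the restriction of the spin representation $\rho\colon\mathfrak{so}(\phi)\otimes_kF\to\mathrm{End}_F(C^{+}(V\otimes_kF))$ to $\mathfrak g\otimes_kF=\bigoplus_{i=1}^r(\mathfrak{so}(\Phi)\otimes_{L,\sigma_i}F)\subset\mathfrak{so}(\phi)\otimes_kF$ is isomorphic to $2^{r-1}$ copies of the exterior tensor product $\rho_1\boxtimes\dots\boxtimes\rho_r$, where $\rho_i\colon\mathfrak{so}(\Phi)\otimes_{L,\sigma_i}F\to\mathrm{End}_F(C^{+}(V\otimes_{L,\sigma_i}F))$ is the spin representation.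
   Context: $\mathfrak g=\mathrm{Res}_{L/\mathbb Q}(\mathfrak{so}(\Phi))$, embedded in $\mathfrak{so}(\phi)$ via the forgetful functor; after extending scalars the embedding is block diagonal $(M_1,\dots,M_r)\mapsto\mathrm{diag}(M_1,\dots,M_r)$ with respect to $V\otimes_kF=\bigoplus_i V\otimes_{L,\sigma_i}F$. $C^+(\cdot)$ denotes the even Clifford algebra (of $(V\otimes_kF,\phi)$, resp. of $(V\otimes_{L,\sigma_i}F,\Phi)$); the spin representation of an orthogonal Lie algebra on the even Clifford algebra is the one obtained by identifying the orthogonal Lie algebra with the Lie algebra of the Clifford group and letting it act by left multiplication. *)

(* Defs.v *)
From HB Require Import structures.
From mathcomp Require Import all_boot all_order all_algebra all_field.
Set Implicit Arguments.
Unset Strict Implicit.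
Unset Printing Implicit Defensive.
Import Order.TTheory GRing.Theory Num.Theory.
Local Open Scope ring_scope.

(* F : splittingFieldType rat is a finite normal extension of Q; in   *)
(* characteristic 0 this is exactly a finite Galois extension of Q.   *)

(* embedding of L into C lands in algC and extends to F (F/L algebraic),*)
(* so it suffices to quantify over ring morphisms F -> algC.          *)
Definition totally_real (F : splittingFieldType rat) (L : {subfield F}) :=
  forall (tau : {rmorphism F -> algC}) (x : F), x \in L -> tau x \is Num.real.

(* Clifford algebra of a diagonal quadratic space (F^I, sum a_i X_i^2) *)
(* over a field F, in the standard basis e_S (S a subset of I; e_S is *)
(* the ordered product of the e_i, i in S, for the order enum_rank).  *)
(* Relations: e_i e_j = - e_j e_i (i<>j), e_i^2 = a_i, i.e. v^2 = q(v).*)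
(* Elements are coefficient functions {set I} -> F.                   *)
Section Clifford.
Variables (F : fieldType) (I : finType).

Definition symd (S T : {set I}) : {set I} := (S :\: T) :|: (T :\: S).

(* number of inversions when concatenating e_S e_T *)
Definition cl_inv (S T : {set I}) : nat :=
  #|[set p : I * I | [&& p.1 \in S, p.2 \in T & (enum_rank p.2 < enum_rank p.1)%N]]|.

(* e_S * e_T = cl_coef a S T * e_(S symd T) *)
Definition cl_coef (a : I -> F) (S T : {set I}) : F :=
  (-1) ^+ cl_inv S T * \prod_(i in S :&: T) a i.

Definition clmul (a : I -> F) (x y : {set I} -> F) : {set I} -> F :=
  fun U => \sum_(S : {set I}) \sum_(T : {set I})
             x S * y T * cl_coef a S T * (U == symd S T)%:R.

Definition clbasis (S : {set I}) : {set I} -> F := fun U => (U == S)%:R.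
Definition clgen (i : I) : {set I} -> F := clbasis [set i].

(* Orthogonal Lie algebra so(q) of the form sum a_i X_i^2, with      *)
(* matrices as functions I -> I -> F acting on column vectors:        *)
(* A^T D + D A = 0 with D = diag a, written entrywise.                *)
Definition is_so (a : I -> F) (A : I -> I -> F) : Prop :=
  forall i j, a i * A i j + a j * A j i = 0.

(* The element of C^+ corresponding to A in so(q) under the identification *)
(* of so(q) with the Lie algebra of the Clifford group:              *)
(* theta(A) = 1/4 sum_k A(e_k) e^k, with dual basis e^k = e_k / a_k;  *)
(* it is the unique bivector with theta(A) v - v theta(A) = A v.      *)
Definition spin_elt (a : I -> F) (A : I -> I -> F) : {set I} -> F :=
  fun U => \sum_(i : I) \sum_(k : I)
             (A i k / (4%:R * a k)) * clmul a (clgen i) (clgen k) U.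

(* index type of the standard basis of the even Clifford algebra C^+ *)
Definition evset : predArgType := {S : {set I} | ~~ odd #|S|}.

(* Spin representation: matrix (in the basis e_T, T even) of left    *)
(* multiplication by theta(A) on C^+ : entry (U,T) is the coefficient *)
(* of e_U in theta(A) e_T.                                            *)
Definition spin_rep (a : I -> F) (A : I -> I -> F) : evset -> evset -> F :=
  fun U T => clmul a (spin_elt a A) (clbasis (val T)) (val U).

End Clifford.

Section Reps.
Variable F : fieldType.

Definition rep_iso (G : Type) (dom : G -> Prop) (X Y : finType)
    (rho : G -> X -> X -> F) (tau : G -> Y -> Y -> F) : Prop :=
  exists (P : Y -> X -> F) (Q : X -> Y -> F),
    [/\ (forall y y', \sum_(x : X) P y x * Q x y' = (y == y')%:R),
        (forall x x', \sum_(y : Y) Q x y * P y x' = (x == x')%:R)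
      & (forall g, dom g -> forall y x,
           \sum_(x' : X) P y x' * rho g x' x
           = \sum_(y' : Y) tau g y y' * P y' x)].

(* exterior tensor product of the matrices R_0, ..., R_(n-1) acting  *)
(* (as Lie algebra elements) on the tensor product, basis {ffun 'I_n -> Y}: *)
(* sum_i 1 (x) ... (x) R_i (x) ... (x) 1.                             *)
Definition ext_tensor (n : nat) (Y : finType) (R : 'I_n -> Y -> Y -> F)
  : {ffun 'I_n -> Y} -> {ffun 'I_n -> Y} -> F :=
  fun u w => \sum_(i < n) R i (u i) (w i) *
               \prod_(j < n | j != i) (u j == w j)%:R.

Definition copies (k : nat) (Y : finType) (R : Y -> Y -> F)
  : 'I_k * Y -> 'I_k * Y -> F :=
  fun p q => (p.1 == q.1)%:R * R p.2 q.2.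

Definition blockdiag (r m : nat) (M : 'I_r -> 'I_m -> 'I_m -> F)
  : 'I_r * 'I_m -> 'I_r * 'I_m -> F :=
  fun p q => (p.1 == q.1)%:R * M p.1 p.2 q.2.

End Reps.
Arguments copies {F} k {Y} R.

(* Main.v *)
Require Import Defs.
From HB Require Import structures.
From mathcomp Require Import all_boot all_order all_algebra all_field.
From mathcomp Require Import ring zify.
Set Implicit Arguments.
Unset Strict Implicit.
Unset Printing Implicit Defensive.
Import Order.TTheory GRing.Theory Num.Theory.
Local Open Scope ring_scope.

Section Gen.
Variables (F : fieldType) (I : finType).
Implicit Types (S T A B C U : {set I}).

Lemma in_symd S T x : (x \in symd S T) = (x \in S) (+) (x \in T).
Proof. by rewrite /symd !inE; case: (x \in S); case: (x \in T). Qed.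

Lemma sum_delta (X : finType) (k : X) (f : X -> F) :
  \sum_x (x == k)%:R * f x = f k.
Proof.
rewrite (bigD1 k) //= eqxx mul1r big1 ?addr0 // => x /negbTE ->; by rewrite mul0r.
Qed.

Lemma cl_inv_sum S T : cl_inv S T =
  (\sum_(x : I) \sum_(y : I) ((x \in S) && (y \in T) && (enum_rank y < enum_rank x)%N : nat))%N.
Proof.
rewrite /cl_inv -sum1_card pair_big /= big_mkcond /=.
by apply: eq_bigr => [[x y]] _; rewrite inE /= andbA; case: (_ && _ && _).
Qed.

Lemma sgn_inv S T : (-1) ^+ cl_inv S T = \prod_(x : I) \prod_(y : I)
   (-1) ^+ ((x \in S) && (y \in T) && (enum_rank y < enum_rank x)%N) :> F.
Proof.
rewrite cl_inv_sum -prodrXr; apply: eq_bigr => x _; by rewrite -prodrXr.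
Qed.

Lemma sgn_symdl A B C : (-1) ^+ cl_inv (symd A B) C =
   (-1) ^+ cl_inv A C * (-1) ^+ cl_inv B C :> F.
Proof.
rewrite !sgn_inv -big_split; apply: eq_bigr => x _; rewrite -big_split.
apply: eq_bigr => y _; rewrite in_symd.
by case: (x \in A); case: (x \in B); case: (y \in C); case: (_ < _)%N;
  rewrite /= ?expr0 ?expr1 ?mulr1 ?mul1r ?mulrNN ?mulr1.
Qed.

Lemma sgn_symdr A B C : (-1) ^+ cl_inv A (symd B C) =
   (-1) ^+ cl_inv A B * (-1) ^+ cl_inv A C :> F.
Proof.
rewrite !sgn_inv -big_split; apply: eq_bigr => x _; rewrite -big_split.
apply: eq_bigr => y _; rewrite in_symd.
by case: (x \in A); case: (y \in B); case: (y \in C); case: (_ < _)%N;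
  rewrite /= ?expr0 ?expr1 ?mulr1 ?mul1r ?mulrNN ?mulr1.
Qed.

Lemma prod_assoc (a : I -> F) A B C :
  (\prod_(i in A :&: B) a i) * (\prod_(i in symd A B :&: C) a i) =
  (\prod_(i in B :&: C) a i) * (\prod_(i in A :&: symd B C) a i).
Proof.
rewrite ![\prod_(i in _) _]big_mkcond -!big_split; apply: eq_bigr => x _.
rewrite !in_setI !in_symd.
by case: (x \in A); case: (x \in B); case: (x \in C); rewrite /= ?mulr1 ?mul1r.
Qed.

Lemma cl_coef_assoc (a : I -> F) A B C :
  cl_coef a A B * cl_coef a (symd A B) C = cl_coef a B C * cl_coef a A (symd B C).
Proof.
rewrite /cl_coef sgn_symdl sgn_symdr.
have := prod_assoc a A B C.
set p1 := \prod_(i in A :&: B) a i; set p2 := \prod_(i in symd A B :&: C) a i.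
set p3 := \prod_(i in B :&: C) a i; set p4 := \prod_(i in A :&: symd B C) a i.
move=> h.
transitivity ((-1) ^+ cl_inv A B * (-1) ^+ cl_inv A C * (-1) ^+ cl_inv B C * (p1 * p2) :> F).
  by ring.
by rewrite h; ring.
Qed.


Lemma clmul_basis_r (a : I -> F) x T U : clmul a x (clbasis F T) U =
  \sum_S x S * cl_coef a S T * (U == symd S T)%:R.
Proof.
rewrite /clmul; apply: eq_bigr => S _; rewrite (bigD1 T) //= /clbasis eqxx mulr1.
by rewrite big1 ?addr0 // => T' /negbTE ->; rewrite !mulr0 !mul0r.
Qed.

Lemma clmul_gen (a : I -> F) p q S : clmul a (clgen F p) (clgen F q) S =
  cl_coef a [set p] [set q] * (S == symd [set p] [set q])%:R.
Proof.
rewrite clmul_basis_r (bigD1 [set p]) //= /clgen /clbasis eqxx mul1r.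
by rewrite big1 ?addr0 // => T' /negbTE ->; rewrite !mul0r.
Qed.

Lemma spin_rep_exp (a : I -> F) (Am : I -> I -> F) (U T : evset I) :
  spin_rep a Am U T = \sum_p \sum_q Am p q / (4%:R * a q) * cl_coef a [set p] [set q]
     * cl_coef a (symd [set p] [set q]) (val T)
     * (val U == symd (symd [set p] [set q]) (val T))%:R.
Proof.
rewrite /spin_rep clmul_basis_r /spin_elt.
transitivity (\sum_S \sum_p \sum_q Am p q / (4%:R * a q) * cl_coef a [set p] [set q]
   * (S == symd [set p] [set q])%:R * cl_coef a S (val T) * (val U == symd S (val T))%:R).
  apply: eq_bigr => S _; rewrite !big_distrl /=; apply: eq_bigr => p _.
  rewrite !big_distrl /=; apply: eq_bigr => q _; by rewrite clmul_gen !mulrA.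
rewrite exchange_big; apply: eq_bigr => p _; rewrite exchange_big; apply: eq_bigr => q _.
rewrite (bigD1 (symd [set p] [set q])) //= eqxx mulr1 big1 ?addr0 // => S /negbTE ->.
by rewrite mulr0 !mul0r.
Qed.

End Gen.
Lemma rank_index (T : finType) (x : T) : val (enum_rank x) = index x (enum T).
Proof. by rewrite -[in RHS](nth_enum_rank x x) index_uniq ?enum_uniq // -cardE. Qed.

Lemma index_allpairs (T1 T2 : eqType) (s1 : seq T1) (s2 : seq T2) x1 x2 :
  x1 \in s1 -> x2 \in s2 ->
  index (x1, x2) [seq (y1, y2) | y1 <- s1, y2 <- s2] = (index x1 s1 * size s2 + index x2 s2)%N.
Proof.
move=> h1 h2; elim: s1 h1 => // y s IH /=; rewrite inE index_cat.
have [->|ne] := eqVneq x1 y => /= [_|hs].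
  have inj : injective (pair y : T2 -> T1 * T2) by move=> a b [].
  by rewrite map_f // index_map // eqxx mul0n.
have -> : ((x1, x2) \in [seq (y, y2) | y2 <- s2]) = false.
  by apply/mapP => -[z _ [e _]]; by rewrite e eqxx in ne.
by rewrite IH // size_map mulSn addnA.
Qed.

Lemma rank_prod (T1 T2 : finType) (x : T1 * T2) :
  val (enum_rank x) = (enum_rank x.1 * #|T2| + enum_rank x.2)%N.
Proof.
rewrite !rank_index cardE; case: x => x1 x2 /=.
by rewrite enumT unlock /= /prod_enum index_allpairs ?mem_enum.
Qed.

Lemma lex_lt (a b c d n : nat) : (b < n)%N -> (d < n)%N ->
  (a * n + b < c * n + d)%N = (a < c)%N || (a == c) && (b < d)%N.
Proof.
move=> hb hd; have [h|h|->] := ltngtP a c => /=.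
- apply/idP; nia.
- apply/negbTE; rewrite -leqNgt; nia.
- by rewrite ltn_add2l.
Qed.

Lemma rank_lex (T1 T2 : finType) (p q : T1 * T2) :
  (enum_rank p < enum_rank q)%N =
  (enum_rank p.1 < enum_rank q.1)%N || (p.1 == q.1) && (enum_rank p.2 < enum_rank q.2)%N.
Proof.
rewrite !rank_prod lex_lt ?ltn_ord //.
by congr (_ || (_ && _)); apply/eqP/eqP => [/val_inj/enum_rank_inj|->].
Qed.

Section Lift.
Variables (F : fieldType) (J K : finType).

Definition liftS (i : J) (X : {set K}) : {set J * K} := [set p | (p.1 == i) && (p.2 \in X)].
Definition sl (T : {set J * K}) (i : J) : {set K} := [set j | (i, j) \in T].

Lemma big_fst (R : Type) (idx : R) (op : Monoid.com_law idx) (i : J) (G : J * K -> R) :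
  \big[op/idx]_(p | p.1 == i) G p = \big[op/idx]_j G (i, j).
Proof.
rewrite -(big_pred1_eq op i (fun a => \big[op/idx]_j G (a, j))).
rewrite (pair_big_dep (fun a => a == i) (fun _ _ => true) (fun a b => G (a, b))) /=.
by apply: eq_big => [[a b]|[a b]] //=; rewrite andbT.
Qed.

Lemma big_fst_out (R : Type) (idx : R) (op : Monoid.com_law idx) (i : J) (G : J * K -> R) :
  (forall p, p.1 != i -> G p = idx) -> \big[op/idx]_p G p = \big[op/idx]_j G (i, j).
Proof.
move=> h; rewrite (bigID (fun p => p.1 == i)) /= big_fst [X in op _ X]big1 ?Monoid.mulm1 //.
Qed.

Definition Csgn (T : {set J * K}) (i : J) : F :=
  \prod_(q : J * K | (enum_rank q.1 < enum_rank i)%N) (-1) ^+ (q \in T).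

Lemma lift_sgn (i : J) (X : {set K}) (T : {set J * K}) :
  (-1) ^+ cl_inv (liftS i X) T = Csgn T i ^+ #|X| * (-1) ^+ cl_inv X (sl T i) :> F.
Proof.
rewrite !sgn_inv (@big_fst_out _ _ _ i); last first.
  move=> p hp; apply: big1 => q _; by rewrite inE (negbTE hp).
transitivity (\prod_(j1 : K) ((\prod_(q : J * K | (enum_rank q.1 < enum_rank i)%N)
     (-1) ^+ ((j1 \in X) && (q \in T))) *
   \prod_(j2 : K) (-1) ^+ ((j1 \in X) && (j2 \in sl T i) && (enum_rank j2 < enum_rank j1)%N)) : F).
  apply: eq_bigr => j1 _; rewrite (bigID (fun q => q.1 == i)) /= mulrC; congr (_ * _).
    rewrite [LHS]big_mkcond [RHS]big_mkcond; apply: eq_bigr => q _.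
    rewrite inE rank_lex /=.
    have [e|ne] := eqVneq q.1 i.
      by rewrite e ltnn.
    rewrite eqxx /= orbF; by case: (_ < _)%N; rewrite ?andbT ?andbF.
  rewrite big_fst; apply: eq_bigr => j2 _; by rewrite !inE /= rank_lex /= eqxx ltnn.
rewrite big_split /=; congr (_ * _).
rewrite -prodr_const [RHS]big_mkcond /=; apply: eq_bigr => j1 _.
case: (j1 \in X) => //=; by rewrite big1.
Qed.

Lemma lift_prod (a : J * K -> F) (i : J) (X : {set K}) (T : {set J * K}) :
  \prod_(p in liftS i X :&: T) a p = \prod_(j in X :&: sl T i) a (i, j).
Proof.
rewrite big_mkcond (@big_fst_out _ _ _ i) /=; last by move=> p hp; rewrite !inE (negbTE hp).
rewrite [RHS]big_mkcond; apply: eq_bigr => j _; by rewrite !inE /= eqxx.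
Qed.

Lemma lift_coef (a : J * K -> F) (i : J) (X : {set K}) (T : {set J * K}) :
  cl_coef a (liftS i X) T = Csgn T i ^+ #|X| * cl_coef (fun j => a (i, j)) X (sl T i).
Proof. by rewrite /cl_coef lift_sgn lift_prod mulrA. Qed.


Lemma set1_liftS (i : J) (j : K) : [set (i, j)] = liftS i [set j].
Proof. by apply/setP => -[i' j']; rewrite !inE xpair_eqE. Qed.

Lemma sl_liftS (i i' : J) (X : {set K}) : sl (liftS i X) i' = if i' == i then X else set0.
Proof. by apply/setP => j; rewrite !inE; case: (i' == i); rewrite ?inE. Qed.

Lemma sl_symd (T1 T2 : {set J * K}) i : sl (symd T1 T2) i = symd (sl T1 i) (sl T2 i).
Proof. by apply/setP => j; rewrite inE (in_symd T1 T2 (i, j)) in_symd !inE. Qed.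

Lemma symd_liftS (i : J) (X Y : {set K}) : symd (liftS i X) (liftS i Y) = liftS i (symd X Y).
Proof. apply/setP => x; rewrite (in_symd _ _ x); case: x => i' j; rewrite !inE /=; by case: (i' == i); case: (j \in X); case: (j \in Y). Qed.

Lemma Csgn_liftS (i : J) (X : {set K}) : Csgn (liftS i X) i = 1.
Proof.
apply: big1 => q hq; rewrite inE.
have -> : q.1 == i = false by apply/negbTE; apply: contraTneq hq => ->; rewrite ltnn.
by rewrite /= expr0.
Qed.

Lemma Csgn_even (T : {set J * K}) i n : ~~ odd n -> Csgn T i ^+ n = 1.
Proof.
move=> hn; rewrite /Csgn prodrXr -exprM -signr_odd oddM.
by rewrite (negbTE hn) andbF expr0.
Qed.

Lemma set_eq_sl (T1 T2 : {set J * K}) : (T1 == T2) = [forall i, sl T1 i == sl T2 i].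
Proof.
apply/eqP/forallP => [-> //|h]; apply/setP => -[i j].
by have /eqP/setP/(_ j) := h i; rewrite !inE.
Qed.

End Lift.

Section Sets.
Variable (K : finType).
Implicit Types (A B X : {set K}).

Lemma symdA A B X : symd A (symd B X) = symd (symd A B) X.
Proof. by apply/setP => x; rewrite !in_symd addbA. Qed.
Lemma symdC A B : symd A B = symd B A.
Proof. by apply/setP => x; rewrite !in_symd addbC. Qed.
Lemma symdK A B : symd (symd A B) B = A.
Proof. by apply/setP => x; rewrite !in_symd -addbA addbb addbF. Qed.

Lemma odd_symd A B : odd #|symd A B| = odd #|A| (+) odd #|B|.
Proof.
have h1 : #|symd A B| = (#|A :\: B| + #|B :\: A|)%N.
  rewrite /symd cardsU; have -> : (A :\: B) :&: (B :\: A) = set0.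
    by apply/setP => x; rewrite !inE; case: (x \in A); case: (x \in B).
  by rewrite cards0 subn0.
have h2 := cardsID B A; have h3 := cardsID A B.
rewrite setIC in h3.
by rewrite h1 -h2 -h3 !oddD; case: (odd #|A :\: B|); case: (odd #|B :\: A|);
  case: (odd #|A :&: B|).
Qed.

Variable z : K.
Definition tog (b : bool) X := if b then symd X [set z] else X.

Lemma tog_odd b X : odd #|tog b X| = b (+) odd #|X|.
Proof. by case: b; rewrite /tog // odd_symd cards1 addbT. Qed.
Lemma togK b X : tog b (tog b X) = X.
Proof. by case: b; rewrite /tog // symdK. Qed.
Lemma tog_symd b A X : tog b (symd A X) = symd A (tog b X).
Proof. by case: b; rewrite /tog // symdA. Qed.

Lemma nrm_proof X : ~~ odd #|tog (odd #|X|) X|.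
Proof. by rewrite tog_odd addbb. Qed.
Definition nrm X : evset K := exist _ (tog (odd #|X|) X) (nrm_proof X).

End Sets.

Section Glue.
Variables (J K : finType).
Definition glue (X : J -> {set K}) : {set J * K} := [set p | p.2 \in X p.1].
Lemma sl_glue X i : sl (glue X) i = X i.
Proof. by apply/setP => j; rewrite !inE. Qed.
Lemma glue_sl T : glue (sl T) = T.
Proof. by apply/setP => [[i j]]; rewrite !inE. Qed.
Lemma card_sl (T : {set J * K}) : #|T| = (\sum_i #|sl T i|)%N.
Proof.
rewrite -sum1_card big_mkcond /=.
transitivity (\sum_i \sum_j (if (i, j) \in T then 1 else 0))%N.
  by rewrite pair_big; apply: eq_big => [[i j]|[i j]].
apply: eq_bigr => i _; rewrite -sum1_card [RHS]big_mkcond; apply: eq_bigr => j _; by rewrite inE.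
Qed.
End Glue.

Lemma odd_sum_odd (I : finType) (f : I -> nat) :
  odd (\sum_i f i) = odd (\sum_i odd (f i)).
Proof.
rewrite !(big_morph odd oddD (erefl (odd 0))); apply: eq_bigr => i _; by case: (odd (f i)).
Qed.

Section Main.
Variables (F : fieldType) (r' m' : nat) (a : 'I_r'.+1 * 'I_m'.+1 -> F).
Hypothesis ha : forall p, a p != 0.
Local Notation J := 'I_r'.+1.
Local Notation K := 'I_m'.+1.
Local Notation I := ('I_r'.+1 * 'I_m'.+1)%type.
Local Notation E := {ffun 'I_r' -> bool}.

Lemma cardE' : #|{: E}| = (2 ^ r')%N.
Proof. by rewrite card_ffun card_bool card_ord. Qed.
Definition idx (t : 'I_(2 ^ r')) : E := enum_val (cast_ord (esym cardE') t).
Definition idxinv (e : E) : 'I_(2 ^ r') := cast_ord cardE' (enum_rank e).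
Lemma idxK t : idxinv (idx t) = t.
Proof. by rewrite /idxinv /idx enum_valK cast_ordKV. Qed.
Lemma idxinvK e : idx (idxinv e) = e.
Proof. by rewrite /idx /idxinv cast_ordK enum_rankK. Qed.

Definition eps (e : E) (i : J) : bool :=
  if unlift ord_max i is Some i' then e i' else odd (\sum_i' (e i' : nat)).

Lemma eps_sum e : ~~ odd (\sum_i (eps e i : nat)).
Proof.
rewrite (bigD1_ord ord_max) //= /eps unlift_none.
rewrite (eq_bigr (fun i : 'I_r' => (e i : nat))); last by move=> i _; rewrite liftK.
by set s := (\sum_(i < r') _)%N; rewrite oddD; case: (odd s).
Qed.

Definition Yt := ('I_(2 ^ r') * {ffun J -> evset K})%type.

Definition Psi_set (y : Yt) : {set I} :=
  glue (fun i => tog ord0 (eps (idx y.1) i) (val (y.2 i))).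

Lemma sl_Psi y i : sl (Psi_set y) i = tog ord0 (eps (idx y.1) i) (val (y.2 i)).
Proof. by rewrite sl_glue. Qed.

Lemma odd_sl_Psi y i : odd #|sl (Psi_set y) i| = eps (idx y.1) i.
Proof. by rewrite sl_Psi tog_odd (negbTE (valP (y.2 i))) addbF. Qed.

Lemma Psi_proof (y : Yt) : ~~ odd #|Psi_set y|.
Proof.
rewrite card_sl odd_sum_odd; under eq_bigr => i _ do rewrite odd_sl_Psi.
exact: eps_sum.
Qed.

Definition Psi (y : Yt) : evset I := exist _ (Psi_set y) (Psi_proof y).

Definition Phi (S : evset I) : Yt :=
  (idxinv [ffun i' => odd #|sl (val S) (lift ord_max i')|],
   [ffun i => nrm ord0 (sl (val S) i)]).

Lemma PhiK y : Phi (Psi y) = y.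
Proof.
case: y => t w; rewrite /Phi /=; congr (_, _).
  rewrite -[RHS]idxK; congr idxinv; apply/ffunP => i'; rewrite ffunE.
  by rewrite odd_sl_Psi /eps liftK.
apply/ffunP => i; rewrite ffunE; apply: val_inj => /=.
by rewrite odd_sl_Psi sl_Psi togK.
Qed.

Lemma eps_Phi S i : eps (idx (Phi S).1) i = odd #|sl (val S) i|.
Proof.
rewrite /Phi /= idxinvK /eps; case: unliftP => [j ->|->]; first by rewrite ffunE.
rewrite (eq_bigr (fun i' => (odd #|sl (val S) (lift ord_max i')| : nat))); last by move=> i' _; rewrite ffunE.
rewrite -(odd_sum_odd (fun i' : 'I_r' => #|sl (val S) (lift ord_max i')|)).
have := valP S; rewrite /= card_sl (bigD1_ord ord_max) //= oddD.
by case: (odd #|sl _ ord_max|); case: (odd _).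
Qed.

Lemma PsiK S : Psi (Phi S) = S.
Proof.
apply: val_inj => /=; apply/setP => -[i j].
by rewrite /Psi_set inE /= eps_Phi ffunE /= togK inE.
Qed.


Lemma symd0l (X : {set K}) : symd set0 X = X.
Proof. by apply/setP => x; rewrite in_symd inE. Qed.

Definition delta (i : J) (X : {set K}) : F :=
  if odd #|X| then cl_coef (fun j => a (i, j)) X [set ord0] else 1.
Definition Dfun (S : {set I}) : F := \prod_i delta i (sl S i).

Lemma cl_coef_neq0 (b : K -> F) (X Y : {set K}) : (forall j, b j != 0) -> cl_coef b X Y != 0.
Proof.
move=> hb; rewrite /cl_coef mulf_neq0 ?signr_eq0 //; apply/prodf_neq0 => j _; exact: hb.
Qed.

Lemma Dfun_neq0 S : Dfun S != 0.
Proof.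
apply/prodf_neq0 => i _; rewrite /delta; case: (odd _) => //.
  by apply: cl_coef_neq0 => j; exact: ha.
exact: oner_neq0.
Qed.

Lemma delta_step (i : J) (Ks w : {set K}) e : ~~ odd #|Ks| -> ~~ odd #|w| ->
  delta i (symd Ks (tog ord0 e w)) * cl_coef (fun j => a (i, j)) Ks (tog ord0 e w)
  = cl_coef (fun j => a (i, j)) Ks w * delta i (tog ord0 e w).
Proof.
move=> hK hw; rewrite /delta odd_symd !tog_odd (negbTE hK) (negbTE hw) /=.
case: e => /=; last by rewrite mul1r mulr1.
rewrite /tog mulrC cl_coef_assoc symdK; by rewrite mulrC.
Qed.

Lemma Dfun_step (i : J) (Ks w : {set K}) e (T : {set I}) :
  ~~ odd #|Ks| -> ~~ odd #|w| -> sl T i = tog ord0 e w ->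
  Dfun (symd (liftS i Ks) T) * cl_coef (fun j => a (i, j)) Ks (sl T i)
  = cl_coef (fun j => a (i, j)) Ks w * Dfun T.
Proof.
move=> hK hw hT; rewrite /Dfun (bigD1 i) //= [in RHS](bigD1 i) //=.
rewrite sl_symd sl_liftS eqxx hT.
have -> : \prod_(i0 | i0 != i) delta i0 (sl (symd (liftS i Ks) T) i0) =
          \prod_(i0 | i0 != i) delta i0 (sl T i0).
  apply: eq_bigr => i0 hi0; by rewrite sl_symd sl_liftS (negbTE hi0) symd0l.
have h := delta_step i e hK hw.
set R := \prod_(i0 | i0 != i) _.
transitivity (delta i (symd Ks (tog ord0 e w)) * cl_coef (fun j => a (i, j)) Ks (tog ord0 e w) * R).
  by ring.
by rewrite h; ring.
Qed.

Lemma prod_ind (i : J) (b : J -> bool) :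
  \prod_(i' | i' != i) ((b i')%:R : F) = ([forall i', (i' != i) ==> b i'])%:R.
Proof.
case: (boolP [forall i', _]) => [/forallP h|h].
  by rewrite big1 // => i' hi'; rewrite (implyP (h i') hi').
move: h; rewrite negb_forall => /existsP[i']; rewrite negb_imply => /andP[hi' hb].
by rewrite (bigD1 i') //= (negbTE hb) mul0r.
Qed.

Lemma condB (i : J) (Ks : {set K}) (y z : Yt) : ~~ odd #|Ks| ->
  (Psi_set y == symd (liftS i Ks) (Psi_set z)) =
  [&& y.1 == z.1, val (y.2 i) == symd Ks (val (z.2 i)) &
      [forall i', (i' != i) ==> (y.2 i' == z.2 i')]].
Proof.
move=> hK; rewrite set_eq_sl.
apply/forallP/and3P => [h|[/eqP e1 /eqP e2 /forallP e3] i'].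
  have hs : forall i', sl (Psi_set y) i' =
      if i' == i then symd Ks (sl (Psi_set z) i') else sl (Psi_set z) i'.
    move=> i'; rewrite (eqP (h i')) sl_symd sl_liftS.
    by case: (i' == i) => //; rewrite symd0l.
  have heps : forall i', eps (idx y.1) i' = eps (idx z.1) i'.
    move=> i'; rewrite -!odd_sl_Psi hs; case: (i' == i) => //.
    by rewrite odd_symd (negbTE hK).
  have e1 : y.1 = z.1.
    rewrite -(idxK y.1) -(idxK z.1); congr idxinv; apply/ffunP => k.
    by have := heps (lift ord_max k); rewrite /eps liftK.
  split; first by rewrite e1.
    have := hs i; rewrite eqxx !sl_Psi heps -tog_symd.
    by move/(congr1 (tog ord0 (eps (idx z.1) i))); rewrite !togK => ->.
  apply/forallP => i'; apply/implyP => hi'.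
  have := hs i'; rewrite (negbTE hi') !sl_Psi heps.
  by move/(congr1 (tog ord0 (eps (idx z.1) i'))); rewrite !togK => /val_inj ->.
rewrite sl_symd sl_liftS !sl_Psi e1; have [->|ne] := eqVneq i' i.
  by rewrite e2 tog_symd.
by rewrite symd0l; have := e3 i'; rewrite ne => /eqP ->.
Qed.


Lemma sum_block (G : I -> I -> F) : (forall p q, p.1 != q.1 -> G p q = 0) ->
  \sum_p \sum_q G p q = \sum_i \sum_j \sum_l G (i, j) (i, l).
Proof.
move=> h; transitivity (\sum_p \sum_l G p (p.1, l)).
  apply: eq_bigr => p _; apply: (@big_fst_out _ _ _ _ _ p.1 (G p)).
  by move=> q hq; apply: h; rewrite eq_sym.
by rewrite [RHS]pair_big; apply: eq_big => -[i j].
Qed.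

Lemma distr3 (c P Dv : F) n (X : 'I_n -> F) :
  c * ((\sum_q X q) * P) * Dv = \sum_q c * (X q * P) * Dv.
Proof. by rewrite big_distrl big_distrr big_distrl. Qed.

Lemma key (M : J -> K -> K -> F) (y z : Yt) :
  Dfun (Psi_set y) * spin_rep a (blockdiag M) (Psi y) (Psi z) =
  copies (2 ^ r') (ext_tensor (fun i => spin_rep (fun j => a (i, j)) (M i))) y z
  * Dfun (Psi_set z).
Proof.
rewrite spin_rep_exp sum_block; last first.
  by move=> p q hpq; rewrite /blockdiag (negbTE hpq) !mul0r.
rewrite /copies /ext_tensor big_distrr [in RHS]big_distrr [in RHS]big_distrl /=.
apply: eq_bigr => i _; rewrite spin_rep_exp big_distrr.
rewrite [in RHS]big_distrl [in RHS]big_distrr [in RHS]big_distrl /=.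
apply: eq_bigr => j _; rewrite big_distrr.
rewrite distr3; apply: eq_bigr => l _ /=.
rewrite /blockdiag /= eqxx mul1r.
rewrite !set1_liftS symd_liftS !lift_coef Csgn_liftS expr1n mul1r sl_liftS eqxx.
set Ks := symd [set j] [set l].
have hK : ~~ odd #|Ks| by rewrite odd_symd !cards1.
rewrite Csgn_even // mul1r prod_ind.
have hc := condB i y z hK.
case: (boolP (Psi_set y == symd (liftS i Ks) (Psi_set z))) => hB.
  move: (hB); rewrite hc => /and3P[/eqP e1 /eqP e2 e3].
  rewrite e1 e2 e3 !eqxx mul1r !mulr1 (eqP hB).
  have h := Dfun_step (e := eps (idx z.1) i) hK (valP (z.2 i)) (sl_Psi z i).
  set c1 := M i j l / _ * _.
  transitivity (c1 * (Dfun (symd (liftS i Ks) (Psi_set z)) *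
       cl_coef (fun j0 : K => a (i, j0)) Ks (sl (Psi_set z) i))); first by ring.
  by rewrite h; ring.
move: hB; rewrite hc.
case: (y.1 == z.1); case: (_ == _); case: [forall _, _] => //= _;
  by rewrite ?mulr0 ?mul0r ?mul1r ?mul0r.
Qed.

Lemma sum_Psi (y : Yt) (G : evset I -> F) : (forall S, Phi S != y -> G S = 0) ->
  \sum_S G S = G (Psi y).
Proof.
move=> h; rewrite (bigD1 (Psi y)) //= big1 ?addr0 // => S hS; apply: h.
by apply: contraNneq hS => <-; rewrite PsiK.
Qed.

Lemma core (dom : (J -> K -> K -> F) -> Prop) :
  rep_iso dom (fun M => spin_rep a (blockdiag M))
    (fun M => copies (2 ^ r') (ext_tensor (fun i => spin_rep (fun j => a (i, j)) (M i)))).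
Proof.
exists (fun y S => (Phi S == y)%:R * Dfun (val S)),
       (fun S y => (Phi S == y)%:R / Dfun (val S)).
split.
- move=> y y'; rewrite (sum_Psi (y := y)); last by move=> S /negbTE ->; rewrite !mul0r.
  by rewrite PhiK eqxx mul1r mulrC divfK // Dfun_neq0.
- move=> S S'; rewrite (bigD1 (Phi S)) //= big1 ?addr0; last first.
    by move=> y hy; rewrite eq_sym (negbTE hy) !mul0r.
  rewrite eqxx mul1r.
  have [<-|ne] := eqVneq S S'.
    by rewrite eqxx mul1r mulVf // Dfun_neq0.
  have -> : (Phi S' == Phi S) = false.
    by apply/negbTE; apply: contra_neq ne => e; rewrite -(PsiK S) -e PsiK.
  by rewrite !mul0r mulr0.
- move=> M _ y S; rewrite (sum_Psi (y := y)); last by move=> S' /negbTE ->; rewrite !mul0r.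
  rewrite (bigD1 (Phi S)) //= big1 ?addr0; last first.
    by move=> y' hy'; rewrite eq_sym (negbTE hy') mul0r mulr0.
  rewrite PhiK !eqxx !mul1r -{1 2}(PsiK S) key.
  rewrite PhiK; congr (_ * _); by rewrite -[in RHS](PsiK S).
Qed.

End Main.

Unset Implicit Arguments.

Theorem corollary1
  (F : splittingFieldType rat) (L : {subfield F})
  (r m : nat) (sig : 'I_r -> 'End(F)) (d : 'I_m -> F)
  (hLtr : totally_real L)
  (hr : \dim L = r)
  (hsig : forall i, kHom 1%VS L (sig i))
  (hsig_inj : forall i j, {in L, sig i =1 sig j} -> i = j)
  (hsig_all : forall f : 'End(F), kHom 1%VS L f ->
                exists i, {in L, f =1 sig i})
  (hm : (5 <= m)%N)
  (hdL : forall j, d j \in L)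
  (hd0 : forall j, d j != 0)
  (hsqrtm1 : exists z : F, z ^+ 2 = -1)
  (hsqrtd : forall i j, exists s : F, s ^+ 2 = sig i (d j)) :
  rep_iso
    (fun M : 'I_r -> 'I_m -> 'I_m -> F =>
       forall i, is_so (fun j => sig i (d j)) (M i))
    (fun M => spin_rep (fun p : 'I_r * 'I_m => sig p.1 (d p.2)) (blockdiag M))
    (fun M => copies (2 ^ (r - 1))%N
                (ext_tensor (fun i => spin_rep (fun j => sig i (d j)) (M i)))).
Proof.
have hr0 : (0 < r)%N by rewrite -hr adim_gt0.
have ha : forall i j, sig i (d j) != 0.
  move=> i j; have /kHomP_tmp [h1 hM] := hsig i.
  have e : sig i (d j) * sig i (d j)^-1 = 1.
    by rewrite -hM ?memvV ?hdL // mulfV // h1 // mem1v.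
  by apply/eqP => h0; move: e; rewrite h0 mul0r => /eqP; rewrite eq_sym oner_eq0.
destruct r as [|r']; first by [].
destruct m as [|m']; first by [].
rewrite subSS subn0; exact: (core (a := fun p => sig p.1 (d p.2)) (fun p => ha p.1 p.2)).
Qed.
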